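(* Let $d\in R$ be nonzero, let $k$ be a positive integer, and let $a_0,a_1,\ldots,a_k$ be a $d$-sequence of length $k$ for $S$. Let $f'\in\mathbb{K}[x]$ be a polynomial of degree $k'\le k$ that can be written as $f'=\tfrac{g'}{d'}$ with $g'\in R[x]$ and $d'\in R$ a nonzero divisor of $d$. Then $$f'\in\mathrm{Int}(S,R)\iff f'(a_i)\in R\ \text{ for all } 0\le i\le k'.$$
   Context: Let $R$ be a unique factorization domain with field of fractions $\mathbb{K}$, and let $S\subseteq R$ be a nonempty subset. Define $\mathrm{Int}(S,R)=\{f\in\mathbb{K}[x]: f(a)\in R \text{ for all } a\in S\}$. For an irreducible $\pi\in R$, $R_{(\pi)}$ denotes the localization of $R$ at the prime ideal $(\pi)$, $\mathrm{Int}(S,R_{(\pi)})=\{f\in\mathbb{K}[x]: f(a)\in R_{(\pi)} \text{ for all } a\in S\}$, and $v_\pi$ denotes the $\pi$-adic valuation. $\pi$-sequence: for an irreducible $\pi\in R$ and a positive integer $k$, a $\pi$-sequence of length $k$ in $S$ is a sequence $u_0,u_1,\ldots,u_k$ of distinct elements of $S$ such that for every $1\le m\le k$, $$\frac{(x-u_0)(x-u_1)\cdots(x-u_{m-1})}{(u_m-u_0)(u_m-u_1)\cdots(u_m-u_{m-1})}\in\mathrm{Int}(S,R_{(\pi)}).$$ $d$-sequence: let $d\in R$ be nonzero and $k$ a positive integer. Let $\pi_1,\ldots,\pi_r$ be a complete list of pairwise non-associate irreducible elements of $R$ dividing $d$. For each $1\le j\le r$ choose a $\pi_j$-sequence $u_{0j},u_{1j},\ldots,u_{kj}$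 of length $k$ in $S$, and let $e_j=v_{\pi_j}\big((u_{kj}-u_{0j})(u_{kj}-u_{1j})\cdots(u_{kj}-u_{k-1,j})\big)$. A $d$-sequence of length $k$ (for $S$) is any sequence $a_0,a_1,\ldots,a_k$ of elements of $R$ satisfying $$a_i\equiv u_{ij}\pmod{\pi_j^{e_j+1}}\quad\text{for all } 0\le i\le k,\ 1\le j\le r.$$ (Such sequences exist by the Chinese remainder theorem; they depend on the choices made, and the $a_i$ need not lie in $S$.) *)

(* Defs.v *)
From HB Require Import structures.
From mathcomp Require Import all_boot all_order all_algebra.
Set Implicit Arguments. Unset Strict Implicit. Unset Printing Implicit Defensive.
Import Order.TTheory GRing.Theory Num.Theory.
Local Open Scope ring_scope.

Definition toK (R : idomainType) (x : R) : {fraction R} := @FracField.tofrac R x.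

Definition dvdR (R : idomainType) (a b : R) : Prop := exists c : R, b = a * c.

Definition assocR (R : idomainType) (a b : R) : Prop :=
  exists u : R, u \is a GRing.unit /\ b = u * a.

Definition irredR (R : idomainType) (p : R) : Prop :=
  p != 0 /\ p \isn't a GRing.unit /\
  forall a b : R, p = a * b -> a \is a GRing.unit \/ b \is a GRing.unit.

Definition is_UFD (R : idomainType) : Prop :=
  (forall a : R, a != 0 -> a \isn't a GRing.unit ->
     exists s : seq R, (forall p, p \in s -> irredR p) /\ a = \prod_(p <- s) p)
  /\
  (forall s t : seq R,
     (forall p, p \in s -> irredR p) -> (forall p, p \in t -> irredR p) ->
     \prod_(p <- s) p = \prod_(p <- t) p ->
     size s = size t /\
     exists2 t' : seq R, perm_eq t t' &
       forall i, (i < size s)%N -> assocR s`_i t'`_i).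

Definition inR (R : idomainType) (x : {fraction R}) : Prop :=
  exists r : R, x = toK r.

Definition inRloc (R : idomainType) (pi : R) (x : {fraction R}) : Prop :=
  exists a b : R, ~ dvdR pi b /\ x = toK a / toK b.

Definition IntSR (R : idomainType) (S : {pred R}) (f : {poly {fraction R}}) : Prop :=
  forall a : R, a \in S -> inR f.[toK a].

Definition IntSRloc (R : idomainType) (S : {pred R}) (pi : R)
  (f : {poly {fraction R}}) : Prop :=
  forall a : R, a \in S -> inRloc pi f.[toK a].

Definition is_val (R : idomainType) (pi a : R) (e : nat) : Prop :=
  dvdR (pi ^+ e) a /\ ~ dvdR (pi ^+ e.+1) a.

Definition seq_poly (R : idomainType) (u : nat -> R) (m : nat) : {poly {fraction R}} :=
  (\prod_(i < m) ('X - (toK (u i))%:P)) *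
  ((\prod_(i < m) toK (u m - u i))^-1)%:P.

Definition is_piseq (R : idomainType) (S : {pred R}) (pi : R) (k : nat)
  (u : nat -> R) : Prop :=
  (forall i, (i <= k)%N -> u i \in S) /\
  (forall i j, (i <= k)%N -> (j <= k)%N -> u i = u j -> i = j) /\
  (forall m, (1 <= m <= k)%N -> IntSRloc S pi (seq_poly u m)).

Definition prime_divisor_list (R : idomainType) (d : R) (ps : seq R) : Prop :=
  (forall j, (j < size ps)%N -> irredR ps`_j /\ dvdR ps`_j d) /\
  (forall j j', (j < size ps)%N -> (j' < size ps)%N -> j <> j' ->
     ~ assocR ps`_j ps`_j') /\
  (forall p, irredR p -> dvdR p d -> exists2 j, (j < size ps)%N & assocR ps`_j p).

Definition is_dseq (R : idomainType) (S : {pred R}) (d : R) (k : nat)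
  (a : nat -> R) : Prop :=
  exists ps : seq R, prime_divisor_list d ps /\
  exists (u : nat -> nat -> R) (e : nat -> nat),
    forall j, (j < size ps)%N ->
      is_piseq S ps`_j k (u j) /\
      is_val ps`_j (\prod_(i < k) (u j k - u j i)) (e j) /\
      (forall i, (i <= k)%N -> dvdR (ps`_j ^+ (e j).+1) (a i - u j i)).

(* Main.v *)
Require Import Defs.
From HB Require Import structures.
From mathcomp Require Import all_boot all_order all_algebra.
From mathcomp Require Import ring.
From Stdlib Require Import Classical.
Set Implicit Arguments. Unset Strict Implicit. Unset Printing Implicit Defensive.
Import Order.TTheory GRing.Theory Num.Theory.
Local Open Scope ring_scope.
Section UFD.
Variable R : idomainType.

Lemma dvdR_refl (a : R) : dvdR a a.
Proof. by exists 1; rewrite mulr1. Qed.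
Lemma dvdR_trans (a b c : R) : dvdR a b -> dvdR b c -> dvdR a c.
Proof. by move=> [x ->] [y ->]; exists (x * y); rewrite mulrA. Qed.
Lemma dvdR_mulr (a b c : R) : dvdR a b -> dvdR a (b * c).
Proof. by move=> [x ->]; exists (x * c); rewrite mulrA. Qed.
Lemma dvdR_mull (a b c : R) : dvdR a b -> dvdR a (c * b).
Proof. by move=> H; rewrite mulrC; apply: dvdR_mulr. Qed.
Lemma dvdR0 (a : R) : dvdR a 0.
Proof. by exists 0; rewrite mulr0. Qed.
Lemma dvdR_add (a b c : R) : dvdR a b -> dvdR a c -> dvdR a (b + c).
Proof. by move=> [x ->] [y ->]; exists (x + y); rewrite mulrDr. Qed.
Lemma dvdR_opp (a b : R) : dvdR a b -> dvdR a (- b).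
Proof. by move=> [x ->]; exists (- x); rewrite mulrN. Qed.
Lemma dvdR_unit (a b : R) : b \is a GRing.unit -> dvdR a b -> a \is a GRing.unit.
Proof. by move=> Hb [x Ex]; move: Hb; rewrite Ex unitrM => /andP []. Qed.
Lemma dvdR_expS (a b : R) n : dvdR (a ^+ n.+1) b -> dvdR (a ^+ n) b.
Proof. by move=> [x ->]; exists (a * x); rewrite exprS mulrA (mulrC _ a). Qed.
Lemma dvdR_prod (s : seq R) x : x \in s -> dvdR x (\prod_(y <- s) y).
Proof.
elim: s => // y s IH; rewrite inE big_cons => /orP [/eqP -> | /IH H].
  by apply: dvdR_mulr; apply: dvdR_refl.
by apply: dvdR_mull.
Qed.

Lemma irred_neq0 (p : R) : irredR p -> p != 0.
Proof. by case. Qed.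
Lemma irred_nunit (p : R) : irredR p -> p \isn't a GRing.unit.
Proof. by case=> _ []. Qed.

Lemma irred_mulu (p u : R) : irredR p -> u \is a GRing.unit -> irredR (p * u).
Proof.
move=> [p0 [pu Hp]] Hu; split; first by rewrite mulf_neq0 //; apply: contraTneq Hu => ->; rewrite unitr0.
split; first by rewrite unitrMl.
move=> x y E; have : p = x * (y * u^-1) by rewrite mulrA -E mulrK.
move=> /Hp [-> | H]; first by left.
by right; move: H; rewrite unitrMl // unitrV.
Qed.

Lemma prod_nil_unit (s : seq R) : (forall p, p \in s -> irredR p) ->
  \prod_(p <- s) p \is a GRing.unit -> s = [::].
Proof.
case: s => // x s H; rewrite big_cons => Hu.
have : x \is a GRing.unit by apply: (dvdR_unit Hu); apply: dvdR_mulr; apply: dvdR_refl.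
by have [_ [/negP]] := H x (mem_head _ _).
Qed.

Variable HUFD : is_UFD R.

Lemma ufd_fact (x : R) : x != 0 -> exists u s, u \is a GRing.unit /\
  (forall p, p \in s -> irredR p) /\ x = u * \prod_(p <- s) p.
Proof.
move=> x0; case Hx: (x \is a GRing.unit).
  by exists x, [::]; split=> //; split=> //; rewrite big_nil mulr1.
have [s [Hs E]] := HUFD.1 x x0 (negbT Hx).
by exists 1, s; split; [exact: unitr1 | rewrite mul1r].
Qed.

Lemma irred_prime (p x y : R) : irredR p -> dvdR p (x * y) -> dvdR p x \/ dvdR p y.
Proof.
move=> Hp [z E].
have p0 := irred_neq0 Hp.
case x0: (x == 0); first by move/eqP: x0 => ->; left; apply: dvdR0.
case y0: (y == 0); first by move/eqP: y0 => ->; right; apply: dvdR0.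
case xu: (x \is a GRing.unit).
  by right; exists (z * x^-1); rewrite mulrA -E mulrC mulKr.
case yu: (y \is a GRing.unit).
  by left; exists (z * y^-1); rewrite mulrA -E mulrK.
have [sx [Hsx Ex]] := HUFD.1 x (negbT x0) (negbT xu).
have [sy [Hsy Ey]] := HUFD.1 y (negbT y0) (negbT yu).
have z0 : z != 0.
  by apply: contraNneq (mulf_neq0 (negbT x0) (negbT y0)) => z0'; rewrite E z0' mulr0.
have Hs : forall q, q \in sx ++ sy -> irredR q.
  by move=> q; rewrite mem_cat => /orP [/Hsx | /Hsy].
have Ps : x * y = \prod_(q <- sx ++ sy) q by rewrite big_cat /= -Ex -Ey.
have sx0 : sx != [::] by apply/eqP => Esx; move: xu; rewrite Ex Esx big_nil unitr1.
have sy0 : sy != [::] by apply/eqP => Esy; move: yu; rewrite Ey Esy big_nil unitr1.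
case zu: (z \is a GRing.unit).
  have Hpz := irred_mulu Hp zu.
  have Hz1 : forall q, q \in [:: p * z] -> irredR q by move=> q; rewrite inE => /eqP ->.
  have Eq1 : \prod_(q <- sx ++ sy) q = \prod_(q <- [:: p * z]) q by rewrite -Ps E big_seq1.
  have [Hsz _] := HUFD.2 (sx ++ sy) [:: p * z] Hs Hz1 Eq1.
  move: Hsz; rewrite size_cat /=.
  by case: sx sx0 {Hsx Ex Hs Ps Eq1} => // ? ?; case: sy sy0 {Hsy Ey} => // ? ? _; rewrite /= addnS.
have [sz [Hsz Ez]] := HUFD.1 z z0 (negbT zu).
have Ht : forall q, q \in p :: sz -> irredR q.
  by move=> q; rewrite inE => /orP [/eqP -> // | /Hsz].
have Eq2 : \prod_(q <- sx ++ sy) q = \prod_(q <- p :: sz) q by rewrite -Ps E big_cons -Ez.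
have [Hsize [t' Hperm Hassoc]] := HUFD.2 (sx ++ sy) (p :: sz) Hs Ht Eq2.
have pin : p \in t' by rewrite -(perm_mem Hperm) mem_head.
set i := index p t'.
have ilt : (i < size (sx ++ sy))%N by rewrite Hsize (perm_size Hperm) index_mem.
have [w [wu Ew]] := Hassoc i ilt.
move: Ew; rewrite nth_index // => Ew.
have Hd : dvdR p (sx ++ sy)`_i.
  by exists w^-1; rewrite Ew mulrC mulKr.
move: Hd; rewrite nth_cat; case: ifP => Hi Hd.
  left; apply: (dvdR_trans Hd); rewrite Ex; apply: dvdR_prod; exact: mem_nth.
right; apply: (dvdR_trans Hd); rewrite Ey; apply: dvdR_prod; apply: mem_nth.
by move: ilt Hi; rewrite size_cat => H1 /negbT; rewrite -leqNgt => H2; rewrite ltn_subLR.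
Qed.
End UFD.
Section UFD2.
Variable R : idomainType.
Variable HUFD : is_UFD R.

Lemma ufd_size (u v : R) (s t : seq R) : u \is a GRing.unit -> v \is a GRing.unit ->
  (forall p, p \in s -> irredR p) -> (forall p, p \in t -> irredR p) ->
  u * \prod_(p <- s) p = v * \prod_(p <- t) p -> size s = size t.
Proof.
move=> Hu Hv Hs Ht E.
case: s Hs E => [|x s] Hs E.
  rewrite big_nil mulr1 in E.
  have : \prod_(p <- t) p \is a GRing.unit by apply: (@dvdR_unit _ _ u) => //; exists v; rewrite E mulrC.
  by move/(prod_nil_unit Ht) => ->.
case: t Ht E => [|y t] Ht E.
  rewrite big_nil mulr1 in E.
  have : \prod_(p <- x :: s) p \is a GRing.unit by apply: (@dvdR_unit _ _ v) => //; exists u; rewrite -E mulrC.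
  by move/(prod_nil_unit Hs).
have Hs' : forall p, p \in (x * u) :: s -> irredR p.
  move=> p; rewrite inE => /orP [/eqP -> | H]; last by apply: Hs; rewrite inE H orbT.
  by apply: irred_mulu => //; apply: Hs; exact: mem_head.
have Ht' : forall p, p \in (y * v) :: t -> irredR p.
  move=> p; rewrite inE => /orP [/eqP -> | H]; last by apply: Ht; rewrite inE H orbT.
  by apply: irred_mulu => //; apply: Ht; exact: mem_head.
have E' : \prod_(p <- (x * u) :: s) p = \prod_(p <- (y * v) :: t) p.
  move: E; rewrite !big_cons => E.
  transitivity (u * (x * \prod_(j <- s) j)); first by ring.
  by rewrite E; ring.
by have [H _] := HUFD.2 _ _ Hs' Ht' E'; exact: H.
Qed.

Lemma prod_nseq (p : R) n : \prod_(q <- nseq n p) q = p ^+ n.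
Proof. by elim: n => [|n IH]; rewrite ?big_nil ?expr0 // /= big_cons IH exprS. Qed.

Lemma finval (p x : R) : irredR p -> x != 0 -> exists N, ~ dvdR (p ^+ N) x.
Proof.
move=> Hp x0; have [u [s [Hu [Hs Ex]]]] := ufd_fact HUFD x0.
exists (size s).+1 => [[c Ec]].
have c0 : c != 0 by apply: contraNneq x0 => c0; rewrite Ec c0 mulr0.
have [v [sc [Hv [Hsc Ec']]]] := ufd_fact HUFD c0.
have Ht : forall q, q \in nseq (size s).+1 p ++ sc -> irredR q.
  by move=> q; rewrite mem_cat => /orP [/nseqP [-> _] | /Hsc].
have E : u * \prod_(q <- s) q = v * \prod_(q <- nseq (size s).+1 p ++ sc) q.
  rewrite -Ex Ec Ec' big_cat /=.
  by rewrite -(prod_nseq p (size s).+1) /=; ring.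
have := ufd_size Hu Hv Hs Ht E; rewrite size_cat size_nseq => H.
by move: (leq_addr (size sc) (size s).+1); rewrite -H ltnn.
Qed.

Lemma valdec (p x : R) : irredR p -> x != 0 ->
  exists t x', x = p ^+ t * x' /\ ~ dvdR p x'.
Proof.
move=> Hp x0; have [N HN] := finval Hp x0.
elim: N x x0 HN => [|N IH] x x0 HN.
  by exfalso; apply: HN; exists x; rewrite expr0 mul1r.
case: (classic (dvdR p x)) => [[x1 Ex]|Hnd]; last by exists 0%N, x; rewrite expr0 mul1r.
have x10 : x1 != 0 by apply: contraNneq x0 => E; rewrite Ex E mulr0.
have [|t [x' [E1 H1]]] := IH x1 x10.
  by move=> [y Ey]; apply: HN; exists y; rewrite Ex Ey exprS mulrA.
by exists t.+1, x'; rewrite Ex E1 exprS mulrA.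
Qed.
End UFD2.
Section ToK.
Variable R : idomainType.
Implicit Types x y : R.
Lemma toKD x y : toK (x + y) = toK x + toK y. Proof. by rewrite /toK rmorphD. Qed.
Lemma toKB x y : toK (x - y) = toK x - toK y. Proof. by rewrite /toK rmorphB. Qed.
Lemma toKN x : toK (- x) = - toK x. Proof. by rewrite /toK rmorphN. Qed.
Lemma toKM x y : toK (x * y) = toK x * toK y. Proof. by rewrite /toK rmorphM. Qed.
Lemma toKX x n : toK (x ^+ n) = toK x ^+ n. Proof. by rewrite /toK rmorphXn. Qed.
Lemma toK0 : toK (0 : R) = 0. Proof. by rewrite /toK rmorph0. Qed.
Lemma toK1 : toK (1 : R) = 1. Proof. by rewrite /toK rmorph1. Qed.
Lemma toK_prod n (F : nat -> R) : toK (\prod_(i < n) F i) = \prod_(i < n) toK (F i).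
Proof. by rewrite /toK rmorph_prod. Qed.
Lemma toK_inj x y : toK x = toK y -> x = y.
Proof. by move=> E; apply/eqP; rewrite -(@tofrac_eq R); apply/eqP. Qed.
Lemma toK_eq0 x : (toK x == 0) = (x == 0).
Proof. by rewrite /toK tofrac_eq0. Qed.
Lemma toK_neq0 x : x != 0 -> toK x != 0.
Proof. by rewrite toK_eq0. Qed.
Lemma toK_unitV x : x \is a GRing.unit -> toK (x^-1) = (toK x)^-1.
Proof. by move=> H; rewrite /toK rmorphV. Qed.
End ToK.
Section Loc.
Variable R : idomainType.
Variable HUFD : is_UFD R.
Variable p : R.
Hypothesis Hp : irredR p.
Local Notation K := {fraction R}.
Local Notation loc := (inRloc p).
Definition mloc (x : K) := exists y, loc y /\ x = toK p * y.

Lemma nd1 : ~ dvdR p 1.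
Proof. by move=> /(dvdR_unit (unitr1 R)); apply/negP; apply: irred_nunit. Qed.
Lemma ndM b b' : ~ dvdR p b -> ~ dvdR p b' -> ~ dvdR p (b * b').
Proof. by move=> H1 H2 /(irred_prime HUFD Hp) []. Qed.
Lemma nd_neq0 b : ~ dvdR p b -> b != 0.
Proof. by move=> H; apply/eqP => E; apply: H; rewrite E; apply: dvdR0. Qed.
Lemma ndK b : ~ dvdR p b -> toK b != 0.
Proof. by move=> /nd_neq0; apply: toK_neq0. Qed.

Lemma loc_toK r : loc (toK r).
Proof. by exists r, 1; split; [exact: nd1 | rewrite toK1 divr1]. Qed.
Lemma loc0 : loc 0. Proof. by rewrite -(toK0 R); apply: loc_toK. Qed.
Lemma loc1 : loc 1. Proof. by rewrite -(toK1 R); apply: loc_toK. Qed.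
Lemma loc_add x y : loc x -> loc y -> loc (x + y).
Proof.
move=> [a [b [Hb ->]]] [a' [b' [Hb' ->]]].
exists (a * b' + a' * b), (b * b'); split; first exact: ndM.
by rewrite toKD !toKM addf_div // ?ndK.
Qed.
Lemma loc_mul x y : loc x -> loc y -> loc (x * y).
Proof.
move=> [a [b [Hb ->]]] [a' [b' [Hb' ->]]].
exists (a * a'), (b * b'); split; first exact: ndM.
by rewrite !toKM mulf_div.
Qed.
Lemma loc_opp x : loc x -> loc (- x).
Proof. by move=> [a [b [Hb ->]]]; exists (- a), b; split => //; rewrite toKN mulNr. Qed.
Lemma loc_sub x y : loc x -> loc y -> loc (x - y).
Proof. by move=> H1 H2; apply: loc_add => //; apply: loc_opp. Qed.
Lemma loc_inv b : ~ dvdR p b -> loc (toK b)^-1.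
Proof. by move=> H; exists 1, b; split => //; rewrite toK1 mul1r. Qed.
Lemma loc_sum (I : Type) (r : seq I) (P : pred I) (F : I -> K) :
  (forall i, P i -> loc (F i)) -> loc (\sum_(i <- r | P i) F i).
Proof.
move=> H; elim/big_rec: _ => [|i x Pi Hx]; first exact: loc0.
by apply: loc_add => //; apply: H.
Qed.

Lemma mloc_loc x : mloc x -> loc x.
Proof. by move=> [y [Hy ->]]; apply: loc_mul => //; apply: loc_toK. Qed.
Lemma mloc0 : mloc 0.
Proof. by exists 0; split; [exact: loc0 | rewrite mulr0]. Qed.
Lemma mloc_add x y : mloc x -> mloc y -> mloc (x + y).
Proof. by move=> [a [Ha ->]] [b [Hb ->]]; exists (a + b); split; [exact: loc_add | rewrite mulrDr]. Qed.
Lemma mloc_opp x : mloc x -> mloc (- x).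
Proof. by move=> [a [Ha ->]]; exists (- a); split; [exact: loc_opp | rewrite mulrN]. Qed.
Lemma mloc_mul x y : mloc x -> loc y -> mloc (x * y).
Proof. by move=> [a [Ha ->]] Hy; exists (a * y); split; [exact: loc_mul | rewrite mulrA]. Qed.
Lemma mloc_sum (I : Type) (r : seq I) (P : pred I) (F : I -> K) :
  (forall i, P i -> mloc (F i)) -> mloc (\sum_(i <- r | P i) F i).
Proof.
move=> H; elim/big_rec: _ => [|i x Pi Hx]; first exact: mloc0.
by apply: mloc_add => //; apply: H.
Qed.
End Loc.
Lemma toK_prodI (R : idomainType) (I : Type) (r : seq I) (P : pred I) (F : I -> R) :
  toK (\prod_(i <- r | P i) F i) = \prod_(i <- r | P i) toK (F i).
Proof. by rewrite /toK rmorph_prod. Qed.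

Lemma Q_sum (F : fieldType) (Q : F -> Prop) (I : Type) (r : seq I) (P : pred I) (G : I -> F) :
  Q 0 -> (forall x y, Q x -> Q y -> Q (x + y)) ->
  (forall i, P i -> Q (G i)) -> Q (\sum_(i <- r | P i) G i).
Proof.
move=> Q0 QD H; elim/big_rec: _ => [|i x Pi Hx] //.
by apply: QD => //; apply: H.
Qed.

Lemma id_tri (F : comRingType) (c M r : F) : c = (c * M + r) - c * (M - 1) - r.
Proof. by ring. Qed.

Lemma tri (F : fieldType) (Q L : F -> Prop) (Q0 : Q 0)
  (QD : forall x y, Q x -> Q y -> Q (x + y)) (QN : forall x, Q x -> Q (- x))
  (QM : forall x y, Q x -> L y -> Q (x * y))
  n (M : nat -> nat -> F) (c : nat -> F) :
 (forall i m, (m < i)%N -> (i <= n)%N -> L (M i m)) ->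
 (forall m, (m <= n)%N -> Q (c m * (M m m - 1))) ->
 (forall i m, (i < m)%N -> (m <= n)%N -> Q (c m * M i m)) ->
 (forall i, (i <= n)%N -> Q (\sum_(m < n.+1) c m * M i m)) ->
 forall m, (m <= n)%N -> Q (c m).
Proof.
move=> H1 H2 H3 H4; elim/ltn_ind => m IH Hm.
have Hm' : (m < n.+1)%N by [].
have H := H4 m Hm; rewrite (bigD1 (inord m)) //= inordK // in H.
have Hr : Q (\sum_(j < n.+1 | j != inord m) c j * M m j).
  apply: Q_sum => // j Hj.
  have Hjn : (j <= n)%N by rewrite -ltnS ltn_ord.
  case: (ltngtP j m) => [jlt | jgt | jeq].
  - by apply: QM; [apply: IH | apply: H1].
  - by apply: H3.
  - by exfalso; move/negP: Hj; apply; apply/eqP/val_inj; rewrite /= inordK.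
rewrite (id_tri (c m) (M m m) (\sum_(j < n.+1 | j != inord m) c j * M m j)).
eapply QD; last (eapply QN; exact: Hr).
eapply QD; first exact: H.
eapply QN; exact: H2.
Qed.

Section Poly.
Variable R : idomainType.
Local Notation K := {fraction R}.
Implicit Types u : nat -> R.

Definition Dn u m : R := \prod_(i < m) (u m - u i).
Definition Nn u m x : R := \prod_(i < m) (x - u i).
Definition Qp u m : {poly K} := \prod_(i < m) ('X - (toK (u i))%:P).

Lemma hornP u m x : (seq_poly u m).[toK x] = toK (Nn u m x) / toK (Dn u m).
Proof.
rewrite /seq_poly hornerM hornerC horner_prod /Nn /Dn !toK_prodI.
by congr (_ * _^-1); apply: eq_bigr => i _; rewrite hornerXsubC toKB.
Qed.

Lemma seq_poly0 u : seq_poly u 0 = 1.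
Proof. by rewrite /seq_poly !big_ord0 invr1 mul1r. Qed.

Lemma size_Qp u m : size (Qp u m) = m.+1.
Proof. by rewrite /Qp size_prod_XsubC [index_enum _]unlock -enumT size_enum_ord. Qed.

Lemma coef_Qp_top u m : (Qp u m)`_m = 1.
Proof.
have := lead_coef_prod_XsubC (index_enum 'I_m) xpredT (fun i : 'I_m => toK (u i)).
by rewrite lead_coefE -/(Qp u m) size_Qp.
Qed.

Lemma coef_Qp_big u m j : (m < j)%N -> (Qp u m)`_j = 0.
Proof.
move=> H; have : (size (Qp u m) <= m.+1)%N by rewrite size_Qp.
by move/leq_sizeP; apply.
Qed.

Lemma seq_polyE u m : seq_poly u m = Qp u m * ((toK (Dn u m))^-1)%:P.
Proof. by rewrite /seq_poly /Qp /Dn toK_prodI. Qed.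

Lemma Nn_lt u m i : (i < m)%N -> Nn u m (u i) = 0.
Proof.
move=> H; apply/eqP/prodf_eq0; exists (Ordinal H) => //=.
by rewrite subrr.
Qed.

Variable k : nat.
Variable u : nat -> R.
Hypothesis Hinj : forall i j, (i <= k)%N -> (j <= k)%N -> u i = u j -> i = j.

Lemma Dn_neq0 m : (m <= k)%N -> Dn u m != 0.
Proof.
move=> Hm; apply/prodf_neq0 => i _; rewrite subr_eq0; apply/eqP => E.
have := Hinj Hm (leq_trans (ltnW (ltn_ord i)) Hm) E.
by move=> Ei; move: (ltn_ord i); rewrite -Ei ltnn.
Qed.

Lemma P_lt m i : (i < m)%N -> (seq_poly u m).[toK (u i)] = 0.
Proof. by move=> H; rewrite hornP Nn_lt // toK0 mul0r. Qed.

Lemma P_eq m : (m <= k)%N -> (seq_poly u m).[toK (u m)] = 1.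
Proof. by move=> H; rewrite hornP divff // toK_neq0 // Dn_neq0. Qed.

Lemma coef_seq_poly_top m : (m <= k)%N -> (seq_poly u m)`_m = (toK (Dn u m))^-1.
Proof. by move=> H; rewrite seq_polyE coefMC coef_Qp_top mul1r. Qed.

Lemma coef_seq_poly_big m j : (m < j)%N -> (seq_poly u m)`_j = 0.
Proof. by move=> H; rewrite seq_polyE coefMC coef_Qp_big // mul0r. Qed.

Lemma decomp n : (n <= k)%N -> forall h : {poly K}, (size h <= n.+1)%N ->
  exists c : nat -> K, h = \sum_(m < n.+1) c m *: seq_poly u m.
Proof.
elim: n => [|n IH] Hn h Hh.
  exists (fun _ => h`_0); rewrite big_ord1 seq_poly0 alg_polyC.
  exact: size1_polyC.
set cc := h`_n.+1 * toK (Dn u n.+1).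
have Hh' : (size (h - cc *: seq_poly u n.+1)%R <= n.+1)%N.
  apply/leq_sizeP => j Hj; rewrite coefB coefZ.
  case: (ltngtP j n.+1) => [jlt | jgt | jeq].
  - by move: Hj; rewrite leqNgt jlt.
  - rewrite coef_seq_poly_big // mulr0 subr0.
    by move/leq_sizeP: Hh; apply.
  - rewrite jeq coef_seq_poly_top // /cc mulfK ?subrr //.
    by rewrite toK_neq0 // Dn_neq0.
have [c' Ec'] := IH (ltnW Hn) _ Hh'.
exists (fun m => if m == n.+1 then cc else c' m).
rewrite big_ord_recr /= eqxx.
have -> : \sum_(i < n.+1) (if (nat_of_ord (widen_ord (leqnSn n.+1) i)) == n.+1 then cc else c' i) *:
    seq_poly u (widen_ord (leqnSn n.+1) i) = \sum_(i < n.+1) c' i *: seq_poly u i.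
  apply: eq_bigr => i _ /=; have := ltn_ord i; rewrite ltnS => Hi.
  by rewrite ifN // neq_ltn ltnS Hi.
by rewrite -Ec' subrK.
Qed.

Lemma horner_decomp n (c : nat -> K) x :
  (\sum_(m < n.+1) c m *: seq_poly u m).[x] = \sum_(m < n.+1) c m * (seq_poly u m).[x].
Proof. by rewrite horner_sum; apply: eq_bigr => i _; rewrite hornerZ. Qed.

Lemma coef_decomp n (c : nat -> K) : (n <= k)%N ->
  (\sum_(m < n.+1) c m *: seq_poly u m)`_n = c n / toK (Dn u n).
Proof.
move=> Hn; rewrite coef_sum big_ord_recr big1; last first.
  move=> i _; rewrite coefZ coef_seq_poly_big; first by rewrite mulr0.
  exact: (ltn_ord i).

by rewrite Monoid.mul1m coefZ coef_seq_poly_top.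
Qed.
End Poly.
Lemma fid (F : fieldType) (x w D : F) e t : x != 0 -> D != 0 -> (t <= e)%N ->
  x ^+ e.+1 * w / (x ^+ t * D) = x * (x ^+ (e - t) * w / D).
Proof.
move=> x0 D0 H; rewrite exprS -{1}(subnK H) exprD.
have xt : x ^+ t != 0 by apply: expf_neq0.
by field; rewrite xt D0.
Qed.

Lemma id_cong (R : comRingType) (A B x y c : R) :
  A * (x - c) - B * (y - c) = (A - B) * (x - c) + B * (x - y).
Proof. by ring. Qed.

Lemma Nn_cong (R : idomainType) (u : nat -> R) q x y m :
  dvdR q (x - y) -> dvdR q (Nn u m x - Nn u m y).
Proof.
move=> H; elim: m => [|m IH]; first by rewrite /Nn !big_ord0 subrr; apply: dvdR0.
rewrite /Nn !big_ord_recr /= -/(Nn u m x) -/(Nn u m y) id_cong.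
by apply: dvdR_add; [apply: dvdR_mulr | apply: dvdR_mull].
Qed.

Section Local.
Variable R : idomainType.
Variable HUFD : is_UFD R.
Local Notation K := {fraction R}.
Variable S : {pred R}.
Variable p : R.
Hypothesis Hp : irredR p.
Variable k : nat.
Variable u : nat -> R.
Hypothesis Hpi : is_piseq S p k u.
Variable e : nat.
Hypothesis Hval : is_val p (\prod_(i < k) (u k - u i)) e.
Local Notation loc := (inRloc p).
Local Notation P := (seq_poly u).

Let Hinj := Hpi.2.1.
Let HuS := Hpi.1.

Lemma Pint m : (m <= k)%N -> IntSRloc S p (P m).
Proof.
case: m => [|m] Hm.
  by move=> s _; rewrite seq_poly0 hornerC; apply: (loc1 Hp).
by apply: Hpi.2.2; rewrite Hm.
Qed.

Lemma Pu_loc m i : (m <= k)%N -> (i <= k)%N -> loc (P m).[toK (u i)].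
Proof. by move=> Hm Hi; apply: Pint => //; apply: HuS. Qed.

Lemma exactL n (c : nat -> K) : (n <= k)%N ->
  (forall i, (i <= n)%N -> loc (\sum_(m < n.+1) c m * (P m).[toK (u i)])) ->
  forall m, (m <= n)%N -> loc (c m).
Proof.
move=> Hn H.
apply: (@tri _ loc loc (loc0 Hp) (loc_add HUFD Hp) (@loc_opp _ p) (loc_mul HUFD Hp) n
  (fun i m => (P m).[toK (u i)])) => //.
- move=> i m Hmi Hi; apply: Pu_loc.
    + by apply: leq_trans Hn; apply: ltnW; apply: leq_trans Hmi Hi.
    + exact: (leq_trans Hi Hn).
- move=> m Hm; rewrite (P_eq Hinj (leq_trans Hm Hn)) subrr mulr0; exact: (loc0 Hp).
- by move=> i m Him _; rewrite P_lt // mulr0; apply: (loc0 Hp).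
Qed.

Lemma valbound m : (m <= k)%N -> exists t D', Dn u m = p ^+ t * D' /\ ~ dvdR p D' /\ (t <= e)%N.
Proof.
move=> Hm.
have p0 := irred_neq0 Hp.
have [t [D' [ED' HD']]] := valdec HUFD Hp (Dn_neq0 Hinj Hm).
exists t, D'; split => //; split => //.
have [E EE] := Hval.1.
have HE : ~ dvdR p E.
  by move=> [z Ez]; apply: Hval.2; exists z; rewrite EE Ez exprSr mulrA.
set A := ('X - (toK (u 0))%:P) ^+ (k - m) * Qp u m.
have Amon : A \is monic by rewrite monicMl ?monic_exp ?monicXsubC // monic_prod_XsubC.
have Asize : size A = k.+1.
  rewrite /A size_monicM ?monic_exp ?monicXsubC //; last first.
    by apply: monic_neq0; apply: monic_prod_XsubC.
  by rewrite size_exp_XsubC size_Qp addSn /= addnS subnK.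
have EA : A * ((toK (Dn u m))^-1)%:P = ('X - (toK (u 0))%:P) ^+ (k - m) * P m.
  by rewrite seq_polyE /A mulrA.
set h := A * ((toK (Dn u m))^-1)%:P.
have hsize : (size h <= k.+1)%N.
  apply/leq_sizeP => j Hj; rewrite /h coefMC.
  have : (size A <= j)%N by rewrite Asize.
  by move/leq_sizeP => ->; rewrite ?mul0r.
have hk : h`_k = (toK (Dn u m))^-1.
  rewrite /h coefMC.
  have : lead_coef A = 1 by apply/eqP.
  by rewrite lead_coefE Asize /= => ->; rewrite mul1r.
have [c Ec] := decomp Hinj (leqnn k) hsize.
have Hck : loc (c k).
  apply: (exactL (leqnn k)) => // i Hi.
  rewrite -horner_decomp -Ec /h EA hornerM horner_exp hornerXsubC.
  apply: (loc_mul HUFD Hp); last by apply: Pu_loc.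
  by rewrite -toKB -toKX; apply: loc_toK.
move: hk; rewrite Ec (@coef_decomp _ k u k c (leqnn k)) => Eck.
have Eck' : c k = toK (Dn u k) / toK (Dn u m).
  rewrite -Eck mulrC divfK //; apply: toK_neq0; exact: (Dn_neq0 Hinj (leqnn k)).
move: Hck; rewrite Eck' => [[a' [b [Hb Eab]]]].
have b0 : toK b != 0 by exact: (ndK Hb).
have Dm0 : toK (Dn u m) != 0 by apply: toK_neq0; exact: (Dn_neq0 Hinj Hm).
move/eqP: Eab; rewrite eqr_div // -!toKM => /eqP /toK_inj.
rewrite ED' -[Dn u k]/(\prod_(i < k) (u k - u i)) EE => Eq.
case: (leqP t e) => // Hte; exfalso.
have Eq2 : p ^+ e * (E * b) = p ^+ e * (p ^+ (t - e) * (D' * a')).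
  by rewrite mulrA Eq -{1}(subnKC (ltnW Hte)) exprD; ring.
have pe0 : p ^+ e != 0 by apply: expf_neq0.
move: Eq2; move/(mulfI pe0).
have tpos : (0 < t - e)%N by rewrite subn_gt0.
rewrite -(prednK tpos) exprS => Eq3.
have : dvdR p (E * b).
  by exists (p ^+ (t - e).-1 * (D' * a')); rewrite Eq3; ring.
by case/(irred_prime HUFD Hp).
Qed.
End Local.
Section Local2.
Variable R : idomainType.
Variable HUFD : is_UFD R.
Local Notation K := {fraction R}.
Variable S : {pred R}.
Variable p : R.
Hypothesis Hp : irredR p.
Variable k : nat.
Variable u : nat -> R.
Hypothesis Hpi : is_piseq S p k u.
Variable e : nat.
Hypothesis Hval : is_val p (\prod_(i < k) (u k - u i)) e.
Variable a : nat -> R.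
Hypothesis Hcong : forall i, (i <= k)%N -> dvdR (p ^+ e.+1) (a i - u i).
Local Notation loc := (inRloc p).
Local Notation P := (seq_poly u).

Let Hinj := Hpi.2.1.

Lemma Pa m i : (m <= k)%N -> (i <= k)%N ->
  mloc p ((P m).[toK (a i)] - (P m).[toK (u i)]).
Proof.
move=> Hm Hi.
have [t [D' [ED' [HD' Hte]]]] := valbound HUFD Hp Hpi Hval Hm.
have [w Ew] := Nn_cong u m (Hcong Hi).
rewrite !hornP -mulrBl -toKB Ew ED' !toKM !toKX.
have p0 : toK p != 0 by apply: toK_neq0; apply: irred_neq0.
rewrite (fid _ p0 (ndK HD') Hte).
exists (toK p ^+ (e - t) * toK w / toK D'); split => //.
apply: (loc_mul HUFD Hp); last exact: (loc_inv HD').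
by rewrite -toKX -toKM; apply: loc_toK.
Qed.

Lemma Pa_loc m i : (m <= k)%N -> (i <= k)%N -> loc (P m).[toK (a i)].
Proof.
move=> Hm Hi; have H := mloc_loc HUFD Hp (Pa Hm Hi).
have -> : (P m).[toK (a i)] = ((P m).[toK (a i)] - (P m).[toK (u i)]) + (P m).[toK (u i)].
  by rewrite subrK.
by apply: (loc_add HUFD Hp) => //; apply: (Pu_loc Hp Hpi).
Qed.

Lemma rowL n (c : nat -> K) (r : R) : (n <= k)%N -> r != 0 ->
  (forall m, (m <= n)%N -> loc (toK r * c m)) ->
  (forall i, (i <= n)%N -> loc (\sum_(m < n.+1) c m * (P m).[toK (a i)])) ->
  forall m, (m <= n)%N -> loc (c m).
Proof.
move=> Hn r0 Hr Hs.
have [N HN] := finval HUFD Hp r0.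
elim: N r r0 Hr HN => [|N IH] r r0 Hr HN.
  by exfalso; apply: HN; exists r; rewrite expr0 mul1r.
case: (classic (dvdR p r)) => [[r1 Er] | Hnd]; last first.
  move=> m Hm; have -> : c m = (toK r)^-1 * (toK r * c m).
    by rewrite mulrA mulVf ?mul1r // toK_neq0.
  by apply: (loc_mul HUFD Hp); [exact: (loc_inv Hnd) | apply: Hr].
have r10 : r1 != 0 by apply: contraNneq r0 => E; rewrite Er E mulr0.
have p0 : toK p != 0 by apply: toK_neq0; apply: irred_neq0.
have Htri : forall m, (m <= n)%N -> mloc p (toK r * c m).
  apply: (@tri _ (mloc p) loc (mloc0 Hp) (mloc_add HUFD Hp) (@mloc_opp _ p)
    (mloc_mul HUFD Hp) n (fun i m => (P m).[toK (a i)])).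
  - move=> i m Hmi Hi; apply: Pa_loc.
    + by apply: leq_trans Hn; apply: ltnW; apply: leq_trans Hmi Hi.
    + exact: (leq_trans Hi Hn).
  - move=> m Hm; rewrite mulrC; apply: (mloc_mul HUFD Hp); last exact: Hr.
    rewrite -(P_eq Hinj (leq_trans Hm Hn)); apply: Pa; exact: (leq_trans Hm Hn).
  - move=> i m Him Hm; rewrite mulrC; apply: (mloc_mul HUFD Hp); last exact: Hr.
    have Hi' : (i <= k)%N by apply: leq_trans Hn; apply: ltnW; apply: leq_trans Him Hm.
    by have := Pa (leq_trans Hm Hn) Hi'; rewrite (P_lt u Him) subr0.
  - move=> i Hi.
    have -> : \sum_(m < n.+1) toK r * c m * (P m).[toK (a i)] =
              toK p * (toK r1 * \sum_(m < n.+1) c m * (P m).[toK (a i)]).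
      rewrite mulr_sumr mulr_sumr; apply: eq_bigr => j _.
      by rewrite Er toKM !mulrA.
    exists (toK r1 * \sum_(m < n.+1) c m * (P m).[toK (a i)]); split => //.
    by apply: (loc_mul HUFD Hp); [apply: loc_toK | apply: Hs].
apply: (IH r1 r10).
  move=> m Hm; have [y [Hy Ey]] := Htri m Hm.
  move: Ey; rewrite Er toKM -mulrA => /(mulfI p0) ->; exact: Hy.
by move=> [z Ez]; apply: HN; exists z; rewrite Er Ez exprS mulrA.
Qed.
End Local2.
Lemma local_equiv (R : idomainType) (HUFD : is_UFD R) (S : {pred R}) (p : R) (Hp : irredR p)
  (k : nat) (u : nat -> R) (Hpi : is_piseq S p k u) (e : nat)
  (Hval : is_val p (\prod_(i < k) (u k - u i)) e) (a : nat -> R)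
  (Hcong : forall i, (i <= k)%N -> dvdR (p ^+ e.+1) (a i - u i))
  (n : nat) (Hn : (n <= k)%N) (h : {poly {fraction R}}) (Hh : (size h <= n.+1)%N)
  (g : {poly R}) (d' : R) (Hd' : d' != 0)
  (Hhg : forall x, h.[toK x] = toK g.[x] / toK d') :
  IntSRloc S p h <-> (forall i, (i <= n)%N -> inRloc p h.[toK (a i)]).
Proof.
have Hinj := Hpi.2.1.
have [c Ec] := decomp Hinj Hn Hh.
have Hev : forall x, h.[x] = \sum_(m < n.+1) c m * (seq_poly u m).[x].
  by move=> x; rewrite Ec horner_decomp.
split.
  move=> HI.
  have Hc : forall m, (m <= n)%N -> inRloc p (c m).
    apply: (exactL HUFD Hp Hpi Hn) => i Hi; rewrite -Hev; apply: HI.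
    by apply: Hpi.1; apply: leq_trans Hi Hn.
  move=> i Hi; rewrite Hev; apply: (loc_sum HUFD Hp) => m _.
  have Hm : (m <= n)%N by rewrite -ltnS.
  apply: (loc_mul HUFD Hp); first exact: Hc.
  apply: (Pa_loc HUFD Hp Hpi Hval Hcong); [exact: leq_trans Hm Hn | exact: leq_trans Hi Hn].
move=> HA.
have Hc : forall m, (m <= n)%N -> inRloc p (c m).
  apply: (rowL HUFD Hp Hpi Hval Hcong Hn Hd'); last by move=> i Hi; rewrite -Hev; apply: HA.
  apply: (exactL HUFD Hp Hpi Hn (c := fun m => toK d' * c m)) => i Hi.
  have -> : \sum_(m < n.+1) toK d' * c m * (seq_poly u m).[toK (u i)] = toK g.[u i].
    have E1 : toK g.[u i] = toK d' * h.[toK (u i)].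
      by rewrite Hhg mulrC divfK // toK_neq0.
    by rewrite E1 Hev mulr_sumr; apply: eq_bigr => j _; rewrite mulrA.
  exact: (loc_toK Hp).
move=> s Hs; rewrite Hev; apply: (loc_sum HUFD Hp) => m _.
have Hm : (m <= n)%N by rewrite -ltnS.
apply: (loc_mul HUFD Hp); first exact: Hc.
exact: (Pint Hp Hpi (leq_trans Hm Hn) Hs).
Qed.
Lemma global (R : idomainType) (HUFD : is_UFD R) (d : R) (ps : seq R)
  (Hps : prime_divisor_list d ps) n : forall (d' y v : R) (s : seq R),
  v \is a GRing.unit -> (forall q, q \in s -> irredR q) -> size s = n ->
  d' = v * \prod_(q <- s) q -> dvdR d' d ->
  (forall j, (j < size ps)%N -> inRloc ps`_j (toK y / toK d')) -> inR (toK y / toK d').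
Proof.
elim: n => [|n IH] d' y v s Hv Hs Hsz Ed' Hdd Hloc.
  move/eqP: Hsz; rewrite size_eq0 => /eqP Es.
  by rewrite Ed' Es big_nil mulr1; exists (y * v^-1); rewrite toKM toK_unitV.
case: s Hs Hsz Ed' => [//|q s0] Hs [Hsz] Ed'.
have Hq : irredR q by apply: Hs; exact: mem_head.
have Hqd : dvdR q d.
  apply: dvdR_trans Hdd; exists (v * \prod_(r <- s0) r); rewrite Ed' big_cons; ring.
have [j Hj [w [wu Ew]]] := Hps.2.2 q Hq Hqd.
set pi := ps`_j in Ew.
have Hpi : irredR pi by have [] := Hps.1 j Hj.
set d1 := (v * w) * \prod_(r <- s0) r.
have Ed1 : d' = pi * d1 by rewrite Ed' big_cons Ew /d1; ring.
have d10 : d1 != 0.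
  rewrite /d1; apply: mulf_neq0.
    by apply/eqP => E; move: (unitrM v w); rewrite E unitr0 Hv wu.
  rewrite prodf_seq_neq0; apply/allP => r Hr /=; apply: irred_neq0; apply: Hs.
  by rewrite inE Hr orbT.
have pi0 : pi != 0 by apply: irred_neq0.
have [a' [b [Hb Eab]]] := Hloc j Hj.
have b0 : toK b != 0 by exact: (ndK Hb).
have dd0 : toK d' != 0 by rewrite Ed1 toK_neq0 // mulf_neq0.
move/eqP: Eab; rewrite eqr_div // -!toKM => /eqP /toK_inj Eq.
have : dvdR pi (y * b) by exists (a' * d1); rewrite Eq Ed1; ring.
case/(irred_prime HUFD Hpi) => // [[y1 Ey]].
have E2 : toK y / toK d' = toK y1 / toK d1.
  rewrite Ey Ed1 !toKM invfM mulrACA divff ?mul1r //; exact: toK_neq0.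
rewrite E2; apply: (IH d1 y1 (v * w) s0) => //.
- by rewrite unitrM Hv wu.
- by move=> r Hr; apply: Hs; rewrite inE Hr orbT.
- apply: dvdR_trans Hdd; rewrite Ed1; exists pi; ring.
- by move=> j' Hj'; rewrite -E2; apply: Hloc.
Qed.

Theorem lemma4p1 (R : idomainType) (HUFD : is_UFD R) (S : {pred R})
  (HS : exists s : R, s \in S) (d : R) (Hd : d != 0) (k : nat) (Hk : (0 < k)%N)
  (a : nat -> R) (Ha : is_dseq S d k a)
  (f' : {poly {fraction R}}) (Hdeg : ((size f').-1 <= k)%N)
  (g' : {poly R}) (d' : R) (Hd' : d' != 0) (Hd'd : dvdR d' d)
  (Hf' : f' = map_poly (@toK R) g' * ((toK d')^-1)%:P) :
  IntSR S f' <-> (forall i, (i <= (size f').-1)%N -> inR f'.[toK (a i)]).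
Proof.
have [ps [Hps [uu [ee Hj]]]] := Ha.
set n := (size f').-1.
have Hsz : (size f' <= n.+1)%N by rewrite /n; case: (size f').
have Hev : forall x, f'.[toK x] = toK g'.[x] / toK d'.
  by move=> x; rewrite Hf' hornerM hornerC /toK horner_map.
have [v [s [Hv [Hs Ed']]]] := ufd_fact HUFD Hd'.
have G : forall y, (forall j, (j < size ps)%N -> inRloc ps`_j (toK y / toK d')) ->
    inR (toK y / toK d').
  by move=> y; apply: (@global R HUFD d ps Hps (size s) d' y v s Hv Hs (erefl _) Ed' Hd'd).
have LE : forall j, (j < size ps)%N ->
    IntSRloc S ps`_j f' <-> (forall i, (i <= n)%N -> inRloc ps`_j f'.[toK (a i)]).
  move=> j Hjj; have [Hpi [Hval Hcong]] := Hj j Hjj.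
  have Hirr : irredR ps`_j by have [] := Hps.1 j Hjj.
  exact: (local_equiv HUFD Hirr Hpi Hval Hcong Hdeg Hsz Hd' Hev).
have inR_loc : forall (q : R) (x : {fraction R}), irredR q -> inR x -> inRloc q x.
  by move=> q x Hq [r ->]; apply: loc_toK.
split.
  move=> HI i Hi; rewrite Hev; apply: G => j Hjj; rewrite -Hev.
  have Hirr : irredR ps`_j by have [] := Hps.1 j Hjj.
  apply: ((LE j Hjj).1) => // t Ht; apply: inR_loc => //; exact: HI.
move=> HA t Ht; rewrite Hev; apply: G => j Hjj; rewrite -Hev.
have Hirr : irredR ps`_j by have [] := Hps.1 j Hjj.
apply: ((LE j Hjj).2) => // i Hi; apply: inR_loc => //; exact: HA.
Qed.
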